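(* Let $d,m,e$ be parameters with $m$ a prime power and $d,e\le m$, let $n=dm$, $p=n^{-0.1}$ and $t=n/p=n^{1.1}$ (assumed an integer). Let $P$ be the random polynomial obtained from $\mathsf{NW\circ Lin}_{d,m,e}$ by independently setting each variable $x_{i,j,h}$ ($i\in[d], j\in[m], h\in[t]$) to zero with probability $1-p$. Then with probability at least $1-o(1)$ (as $n\to\infty$), $\mathsf{NW}_{d,m,e}$ is a projection of $P$, i.e. it is obtained from $P$ by setting some further variables to zero and renaming the remaining variables.
   Context: Identify $[m]$ with $\mathbb{F}_m$. $\mathsf{NW}_{d,m,e}(\{x_{i,j}\})=\sum_{q\in\mathbb{F}_m[u],\ \deg q<e} x_{1,q(1)}\cdots x_{d,q(d)}$. The polynomial $\mathsf{NW\circ Lin}_{d,m,e}$ in variables $\{x_{i,j,h}: i\in[d], j\in[m], h\in[t]\}$ is obtained from $\mathsf{NW}_{d,m,e}$ by substituting $x_{i,j}\mapsto \sum_{h=1}^{t} x_{i,j,h}$ for every $i\in[d], j\in[m]$. *)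

(* Defs.v *)
From HB Require Import structures.
From mathcomp Require Import all_boot all_order all_algebra all_field.
From mathcomp Require Import mpoly.
From mathcomp Require Import reals.
Set Implicit Arguments. Unset Strict Implicit. Unset Printing Implicit Defensive.
Import Order.TTheory GRing.Theory Num.Theory.
Local Open Scope ring_scope.

Notation polyV F T := {mpoly F[#|T|]}.

Definition varX (F : fieldType) (T : finType) (v : T) : polyV F T :=
  'X_(enum_rank v).

Definition substV (F : fieldType) (T U : finType) (s : T -> polyV F U)
  (P : polyV F T) : polyV F U :=
  P \mPo [tuple s (enum_val i) | i < #|T|].

Definition NWvar (K : finFieldType) (d : nat) : finType := ('I_d * K)%type.
Definition NWLvar (K : finFieldType) (d t : nat) : finType := ('I_d * K * 'I_t)%type.

(* The polynomials q of degree < e are exactly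
   Poly c for c an e-tuple of coefficients (bijectively).  The points
   1,...,d of [m] are identified with elements a 1, ..., a d of F_m via an
   injective map a (the identification [m] = F_m). *)
Definition NW (F : fieldType) (K : finFieldType) (d e : nat) (a : 'I_d -> K)
  : polyV F (NWvar K d) :=
  \sum_(c : e.-tuple K) \prod_(i < d) varX F ((i, (Poly c).[a i]) : NWvar K d).

Definition NWLin (F : fieldType) (K : finFieldType) (d e t : nat)
  (a : 'I_d -> K) : polyV F (NWLvar K d t) :=
  substV (fun v : NWvar K d =>
            \sum_(h < t) varX F ((v.1, v.2, h) : NWLvar K d t))
         (NW F e a).

Definition restrict (F : fieldType) (T : finType) (rho : {ffun T -> bool})
  (P : polyV F T) : polyV F T :=
  substV (fun w : T => if rho w then varX F w else 0) P.

Definition is_projection (F : fieldType) (V W : finType)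
  (Q : polyV F V) (P : polyV F W) : Prop :=
  exists sigma : W -> option V,
    (forall w w' v, sigma w = Some v -> sigma w' = Some v -> w = w') /\
    substV (fun w => match sigma w with Some v => varX F v | None => 0 end) P
      = Q.

Definition restr_weight (R : realType) (T : finType) (p : R)
  (rho : {ffun T -> bool}) : R :=
  \prod_(w : T) (if rho w then p else 1 - p).

(* Main.v *)
Require Import Defs.
From HB Require Import structures.
From mathcomp Require Import all_boot all_order all_algebra all_field.
From mathcomp Require Import mpoly.
From mathcomp Require Import reals.
From mathcomp Require Import ring lra.
Import Order.TTheory GRing.Theory Num.Theory.
Local Open Scope ring_scope.

Lemma substV_comp (F : fieldType) (T U V : finType) (s1 : T -> polyV F U)
  (s2 : U -> polyV F V) P :
  substV s2 (substV s1 P) = substV (fun v => substV s2 (s1 v)) P.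
Proof.
rewrite /substV [P \mPo _]comp_mpolyE raddf_sum [in RHS]comp_mpolyE.
apply: eq_bigr => m _ /=.
rewrite linearZ /= rmorph_prod; congr (_ *: _).
by apply: eq_bigr => i _; rewrite rmorphXn !tnth_map.
Qed.

Lemma substV_X (F : fieldType) (T : finType) (P : polyV F T) :
  substV (@varX F T) P = P.
Proof.
rewrite /substV -[RHS]comp_mpoly_id; congr comp_mpoly.
by apply: eq_from_tnth => i; rewrite !tnth_map /varX enum_valK tnth_ord_tuple.
Qed.

Lemma substV_ext (F : fieldType) (T U : finType) (s s' : T -> polyV F U) P :
  (forall v, s v = s' v) -> substV s P = substV s' P.
Proof.
move=> H; rewrite /substV; congr comp_mpoly.
by apply: eq_from_tnth => i; rewrite !tnth_map H.
Qed.

Lemma substV_X1 (F : fieldType) (T U : finType) (s : T -> polyV F U) v :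
  substV s (varX F v) = s v.
Proof. by rewrite /substV /varX comp_mpolyXU -tnth_nth tnth_map tnth_ord_tuple enum_rankK. Qed.

Lemma substV_sum (F : fieldType) (T U : finType) (s : T -> polyV F U) (I : Type) (r : seq I) (Pr : pred I) (G : I -> polyV F T) :
  substV s (\sum_(i <- r | Pr i) G i) = \sum_(i <- r | Pr i) substV s (G i).
Proof. by rewrite /substV raddf_sum. Qed.

Lemma proj_ok (F : fieldType) (K : finFieldType) (d e t : nat) (a : 'I_d -> K)
  (rho : {ffun NWLvar K d t -> bool}) :
  (forall x : 'I_d * K, exists h : 'I_t, rho (x, h)) ->
  is_projection (NW F e a) (restrict rho (NWLin F e t a)).
Proof.
move=> H.
pose h0 x := xchoose (H x).
have h0P x : rho (x, h0 x) by exact: (xchooseP (H x)).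
exists (fun w : NWLvar K d t => if w.2 == h0 w.1 then Some w.1 else None).
split.
  case=> [x h] [x' h'] v /=.
  case: eqP => // -> [<-]; case: eqP => // -> [<-] //.
rewrite /restrict /NWLin !substV_comp -[RHS]substV_X.
apply: substV_ext => -[i j].
rewrite substV_sum (bigD1 (h0 (i, j))) //= big1 ?addr0.
  by rewrite !substV_X1 /= (h0P (i, j)) substV_X1 /= eqxx.
move=> h hne; rewrite !substV_X1; case: (rho _).
  by rewrite substV_X1 /= (negbTE hne).
by rewrite /substV comp_mpoly0.
Qed.
Lemma sum_prod_ffun (R : realType) (T : finType) (g : T -> bool -> R) :
  \sum_(rho : {ffun T -> bool}) \prod_w g w (rho w) = \prod_w (g w true + g w false).
Proof. rewrite (eq_bigr (fun w => \sum_(b : bool) g w b)); last by move=> w _; rewrite big_bool.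
rewrite bigA_distr_bigA; apply: eq_bigr => f _ => /=. by []. Qed.

Lemma total_weight (R : realType) (T : finType) (p : R) :
  \sum_(rho : {ffun T -> bool}) restr_weight p rho = 1.
Proof.
rewrite /restr_weight (@sum_prod_ffun R T (fun w (b : bool) => if b then p else 1 - p)).
by apply: big1 => w _; rewrite addrC subrK.
Qed.

Lemma dead_weight (R : realType) (K : finFieldType) d t (p : R) (x : 'I_d * K) :
  \sum_(rho : {ffun NWLvar K d t -> bool})
     (if [forall h : 'I_t, ~~ rho (x, h)] then restr_weight p rho else 0)
  = (1 - p) ^+ t.
Proof.
pose g' (w : NWLvar K d t) (b : bool) :=
  if (w.1 == x) && b then 0 else (if b then p else 1 - p).
transitivity (\sum_(rho : {ffun NWLvar K d t -> bool}) \prod_w g' w (rho w)).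
  apply: eq_bigr => rho _; rewrite /restr_weight.
  case: ifP => [/forallP H | /negbT /forallPn [h /negPn Hh]].
    apply: eq_bigr => -[y h] _; rewrite /g' /=.
    by case: eqP => //= ->; move: (H h); case: (rho _).
  by rewrite (bigD1 (x, h)) //= /g' /= eqxx Hh mul0r.
rewrite sum_prod_ffun.
transitivity (\prod_(y : 'I_d * K) \prod_(h : 'I_t) (if y == x then 1 - p else 1)).
  rewrite pair_big; apply: eq_bigr => -[y h] _ /=; rewrite /g' /=.
  by case: (y == x) => /=; rewrite ?add0r // addrC subrK.
rewrite (bigD1 x) //= [X in _ * X]big1 ?mulr1; last by move=> y yx; rewrite (negbTE yx) big1.
by rewrite eqxx prodr_const card_ord.
Qed.

Lemma prob_bound (R : realType) (K : finFieldType) d t (p : R) :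
  0 <= p <= 1 ->
  1 - (d * #|K|)%:R * (1 - p) ^+ t <=
  \sum_(rho in [set rho : {ffun NWLvar K d t -> bool} |
                [forall x : 'I_d * K, [exists h : 'I_t, rho (x, h)]]])
     restr_weight p rho.
Proof.
move=> /andP [p0 p1].
have W0 rho : 0 <= restr_weight p rho.
  by apply: prodr_ge0 => w _; case: (rho w); rewrite ?subr_ge0.
set S := [set rho | _].
have := @total_weight R (NWLvar K d t) p.
rewrite (bigID (mem S)) /= => Htot.
suff Hle : \sum_(rho | rho \notin S) restr_weight p rho <= (d * #|K|)%:R * (1 - p) ^+ t.
  by lra.
apply: (@le_trans _ _ (\sum_(rho : {ffun NWLvar K d t -> bool}) \sum_(x : 'I_d * K)
     (if [forall h : 'I_t, ~~ rho (x, h)] then restr_weight p rho else 0))).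
  rewrite [X in _ <= X](bigID (fun rho => rho \notin S)) /=.
  rewrite -[X in X <= _]addr0; apply: lerD; last first.
    by apply: sumr_ge0 => rho _; apply: sumr_ge0 => x _; case: ifP.
  apply: ler_sum => rho; rewrite inE negb_forall => /existsP [x].
  rewrite negb_exists => Hx.
  rewrite (bigD1 x) //= Hx lerDl.
  by apply: sumr_ge0 => y _; case: ifP.
rewrite exchange_big /=.
under eq_bigr do rewrite dead_weight.
by rewrite sumr_const card_prod card_ord mulr_natl.
Qed.

Lemma bern2 (R : realType) (x : R) (k : nat) : 0 <= x ->
  2 + 2 * k%:R * x + k%:R * (k%:R - 1) * x ^+ 2 <= 2 * (1 + x) ^+ k.
Proof.
move=> x0; elim: k => [|k IH].
  by rewrite expr0 !(mulr0, mul0r, addr0, mulr1).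
have kk : 0 <= k%:R * (k%:R - 1) :> R.
  case: k {IH} => [|k]; first by rewrite mul0r.
  by rewrite mulr_ge0 // -natr1 addrK.
have x3 : 0 <= k%:R * (k%:R - 1) * (x * (x * x)) by rewrite mulr_ge0 // !mulr_ge0.
have H : (1 + x) * (2 + 2 * k%:R * x + k%:R * (k%:R - 1) * x ^+ 2) <=
       (1 + x) * (2 * (1 + x) ^+ k).
  by rewrite ler_wpM2l // addr_ge0.
have -> : 2 * (1 + x) ^+ k.+1 = (1 + x) * (2 * (1 + x) ^+ k) by rewrite exprS mulrCA.
apply: le_trans H; rewrite -[k.+1%:R]natr1.
rewrite -subr_ge0.
set kk' := k%:R * (k%:R - 1) in kk x3 *.
have -> : (1 + x) * (2 + 2 * k%:R * x + kk' * x ^+ 2) -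
  (2 + 2 * (k%:R + 1) * x + (k%:R + 1) * (k%:R + 1 - 1) * x ^+ 2)
  = kk' * (x * (x * x)) by rewrite /kk'; ring.
exact: x3.
Qed.

Theorem lemma7p2 (F : fieldType) (R : realType) (eps : R) :
  0 < eps ->
  exists N : nat,
  forall (K : finFieldType) (d m e t : nat) (a : 'I_d -> K) (p : R),
    #|K| = m -> injective a -> (d <= m)%N -> (e <= m)%N ->
    (N <= d * m)%N ->
    0 < p -> p ^+ 10 = ((d * m)%:R)^-1 ->
    t%:R = (d * m)%:R / p ->
    exists S : {set {ffun NWLvar K d t -> bool}},
      (forall rho, rho \in S ->
         is_projection (NW F e a) (restrict rho (NWLin F e t a))) /\
      1 - eps <= \sum_(rho in S) restr_weight p rho.
Proof.
move=> eps0.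
exists (Num.trunc (2 / eps)).+2.
move=> K d m e t a p Km ainj dm em Nn p0 p10 tdef.
exists [set rho : {ffun NWLvar K d t -> bool} |
                [forall x : 'I_d * K, [exists h : 'I_t, rho (x, h)]]].
split.
  move=> rho; rewrite inE => /forallP H; apply: proj_ok => x.
  by apply/existsP; apply: H.
have n2 : (2 <= d * m)%N by apply: leq_trans Nn.
have n0 : 0 < (d * m)%:R :> R by rewrite ltr0n; apply: leq_trans n2.
have p1 : p <= 1.
  by rewrite -(@expr_le1 R 10 p isT (ltW p0)) p10 invf_le1 // ler1n; apply: ltnW.
have := @prob_bound R K d t p; rewrite (ltW p0) p1 => /(_ isT) Hpb; apply: le_trans Hpb.
rewrite Km.
set n := (d * m)%:R.
set A := (1 - p) ^+ t.
set B := (1 + p) ^+ t.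
have A0 : 0 <= A by rewrite exprn_ge0 // subr_ge0.
have AB : A * B <= 1.
  have pp : p * p <= 1 by nra.
  have E : (1 - p) * (1 + p) = 1 - p * p by ring.
  by rewrite /A /B -exprMn E exprn_ile1 // ?subr_ge0 // gerBl mulr_ge0 // ltW.
have tp : t%:R * p = n by rewrite tdef divfK // gt_eqF.
have Bb : n * (n - 1) <= 2 * B.
  apply: le_trans (@bern2 R p t (ltW p0)).
  have -> : t%:R * (t%:R - 1) * p ^+ 2 = (t%:R * p) * (t%:R * p) - (t%:R * p) * p
    by ring.
  rewrite !mulrA tp.
  nra.
have epsn : 2 < eps * (n - 1).
  have h1 : 2 / eps < (Num.trunc (2 / eps)).+1%:R by apply: truncnS_gt.
  have h2 : (Num.trunc (2 / eps)).+1%:R + 1 <= n.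
    by rewrite natr1 /n ler_nat.
  have h3 : 2 / eps < n - 1 by lra.
  have := h3; rewrite -(ltr_pM2r eps0) divfK ?gt_eqF // => h4.
  by rewrite mulrC.
suff : n * A <= eps by lra.
have nn1 : 0 < n * (n - 1).
  apply: mulr_gt0 => //; rewrite subr_gt0 /n ltr1n; exact: n2.
rewrite -(ler_pM2r nn1).
apply: le_trans (_ : n * A * (2 * B) <= _).
  by rewrite ler_wpM2l // mulr_ge0 // ltW.
have -> : n * A * (2 * B) = 2 * n * (A * B) by ring.
have h2n : 0 <= 2 * n by lra.
have : 2 * n * (A * B) <= 2 * n by rewrite ler_piMr //; lra.
nra.
Qed.
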